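(* Let $L$ be any linear order. Then $L/\!\sim_\omega \;\cong 1$ (i.e. $L$ has exactly one $\sim_\omega$-class, or more precisely all elements of $L$ are $\sim_\omega$-equivalent) if and only if $L$ is isomorphic to a suborder of $U$.
   Context: For a linear order $L$ and $x,y\in L$, write $[\{x,y\}]$ for the closed interval between $x$ and $y$ (i.e. $[x,y]$ if $x\le y$, $[y,x]$ otherwise). The countable condensation $\sim_\omega$ on $L$ is defined by $x\sim_\omega y$ iff $|[\{x,y\}]|\le\aleph_0$; it is an equivalence relation whose classes are intervals, and $L/\!\sim_\omega$ is the linear order of classes (class $A<$ class $B$ iff every element of $A$ is below every element of $B$). $U$ (the ''$\omega_1$-lengthened rational line'') is the linear order with point set $\{u_\alpha:\alpha<\omega_1\}\cup\{-u_\alpha:\alpha<\omega_1\}\cup\bigcup_{\alpha<\omega_1}\mathbb{Q}(\alpha)\cup\bigcup_{\alpha<\omega_1}\mathbb{Q}(-\alpha)\cup\mathbb{Q}(\mathrm{mid})$, where each $\mathbb{Q}(\cdot)$ is a copy of the rationals, ordered as follows: the right part $R=\{u_\alpha\}\cup\bigcup\mathbb{Q}(\alpha)$ is ordered by $u_\alpha<\mathbb{Q}(\alpha)<u_{\alpha+1}$ and $\{u_\alpha\}\cup\mathbb{Q}(\alpha)<\{u_\beta\}\cup\mathbb{Q}(\beta)$ for $\alpha<\beta$ (so $R$ is $\omega_1$ with each point replaced by a point followed by a copy of $\mathbb{Q}$); the left part $\{-u_\alpha\}\cup\bigcup\mathbb{Q}(-\alpha)$ is ordered as the reverse of $R$ (so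 $-u_{\alpha+1}<\mathbb{Q}(-\alpha)<-u_\alpha$ and the blocks for larger $\alpha$ lie further left); and $U=(\text{left part})+\mathbb{Q}(\mathrm{mid})+R$, i.e. $-u_0<\mathbb{Q}(\mathrm{mid})<u_0$. *)

(* Defs.v *)
From mathcomp Require Import all_boot all_order all_algebra.
Import Order.TTheory GRing.Theory Num.Theory.
Local Open Scope ring_scope.
Set Implicit Arguments.
Unset Strict Implicit.
Unset Printing Implicit Defensive.

Record strict_linear_order (T : Type) (lt : T -> T -> Prop) : Prop := {
  slo_irrefl : forall x, ~ lt x x;
  slo_trans  : forall x y z, lt x y -> lt y z -> lt x z;
  slo_total  : forall x y, lt x y \/ x = y \/ lt y x
}.

Definition countable_set (T : Type) (P : T -> Prop) : Prop :=
  exists f : T -> nat, forall x y, P x -> P y -> f x = f y -> x = y.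

Definition closed_between (T : Type) (lt : T -> T -> Prop) (x y z : T) : Prop :=
  let le a b := lt a b \/ a = b in
  (le x z /\ le z y) \/ (le y z /\ le z x).

Definition omega_equiv (T : Type) (lt : T -> T -> Prop) (x y : T) : Prop :=
  countable_set (closed_between lt x y).

Record is_omega1 (W : Type) (ltW : W -> W -> Prop) : Prop := {
  o1_linear : strict_linear_order ltW;
  o1_wf : well_founded ltW;
  o1_uncountable : ~ countable_set (fun _ : W => True);
  o1_segments : forall a : W, countable_set (fun b => ltW b a)
}.

(** Points of U built over omega_1 = W.
    [Upos a None] = u_a,   [Upos a (Some q)] = q in Q(a),
    [Uneg a None] = -u_a,  [Uneg a (Some q)] = q in Q(-a),
    [Umid q] = q in Q(mid). *)
Inductive Upt (W : Type) : Type :=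
  | Uneg : W -> option rat -> Upt W
  | Umid : rat -> Upt W
  | Upos : W -> option rat -> Upt W.
Arguments Uneg {W}. Arguments Umid {W}. Arguments Upos {W}.

Definition block_lt (x y : option rat) : Prop :=
  match x, y with
  | None, Some _ => True
  | Some p, Some q => (p < q)%R
  | _, _ => False
  end.

(** The right part R: omega_1 with each point replaced by a point followed
    by a copy of Q (lexicographic order). *)
Definition R_lt (W : Type) (ltW : W -> W -> Prop)
    (a : W) (x : option rat) (b : W) (y : option rat) : Prop :=
  ltW a b \/ (a = b /\ block_lt x y).

(** The order of U = (reverse of R) + Q(mid) + R. *)
Definition U_lt (W : Type) (ltW : W -> W -> Prop) (s t : Upt W) : Prop :=
  match s, t with
  | Uneg a x, Uneg b y => R_lt ltW b y a x
  | Uneg _ _, _ => True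
  | Umid _, Uneg _ _ => False
  | Umid p, Umid q => (p < q)%R
  | Umid _, Upos _ _ => True
  | Upos a x, Upos b y => R_lt ltW a x b y
  | Upos _ _, _ => False
  end.

Definition embeds_into (T : Type) (ltT : T -> T -> Prop)
    (S : Type) (ltS : S -> S -> Prop) : Prop :=
  exists f : T -> S, forall x y, ltT x y <-> ltS (f x) (f y).

(* Main.v *)
Require Import Defs.
From Stdlib Require Import ClassicalEpsilon FunctionalExtensionality.
From mathcomp Require Import all_boot all_order all_algebra.
From mathcomp Require Import ring lra.
Import Order.TTheory GRing.Theory Num.Theory.

Lemma exmax (P : nat -> Prop) (v : nat -> rat) n :
  (exists i, (i < n)%N /\ P i) ->
  exists k, (k < n)%N /\ P k /\ forall i, (i < n)%N -> P i -> (v i <= v k)%R.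
Proof.
elim: n => [|n IH] Hex.
  by case: Hex => i [].
case: (classic (exists i, (i < n)%N /\ P i)) => [Hn|Hno].
  case: (IH Hn) => k [Hk [Pk Hm]].
  case: (classic (P n /\ (v k < v n)%R)) => [[Pn Hlt]|Hn'].
    exists n; split => //; split => // i Hi Pi.
    move: Hi; rewrite ltnS leq_eqVlt => /orP [/eqP->|Hi]; first exact: lexx.
    exact: le_trans (Hm i Hi Pi) (ltW Hlt).
  exists k; split; first by apply: leq_trans Hk _.
  split => // i Hi Pi.
  move: Hi; rewrite ltnS leq_eqVlt => /orP [/eqP Ei|Hi]; last exact: Hm.
  subst i; rewrite leNgt; apply/negP => Hlt; apply: Hn'; by split.
case: Hex => i [Hi Pi].
have Ein : i = n.
  move: Hi; rewrite ltnS leq_eqVlt => /orP [/eqP //|Hi].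
  by exfalso; apply: Hno; exists i.
subst i; exists n; split => //; split => // j Hj Pj.
move: Hj; rewrite ltnS leq_eqVlt => /orP [/eqP->|Hj]; first exact: lexx.
by exfalso; apply: Hno; exists j.
Qed.

Lemma exmin (P : nat -> Prop) (v : nat -> rat) n :
  (exists i, (i < n)%N /\ P i) ->
  exists k, (k < n)%N /\ P k /\ forall i, (i < n)%N -> P i -> (v k <= v i)%R.
Proof.
move=> H; case: (@exmax P (fun i => (- v i)%R) n H) => k [Hk [Pk Hm]].
exists k; split => //; split => // i Hi Pi.
have := Hm i Hi Pi; lra.
Qed.

Lemma between n (A B : nat -> Prop) (v : nat -> rat) :
  (forall i j, (i < n)%N -> (j < n)%N -> A i -> B j -> (v i < v j)%R) ->
  exists q, (forall i, (i < n)%N -> A i -> (v i < q)%R) /\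
            (forall j, (j < n)%N -> B j -> (q < v j)%R).
Proof.
move=> H.
case: (classic (exists i, (i < n)%N /\ A i)) => [HA|HA];
case: (classic (exists i, (i < n)%N /\ B i)) => [HB|HB].
- case: (@exmax A v n HA) => k [Hk [Ak Hk']].
  case: (@exmin B v n HB) => l [Hl [Bl Hl']].
  have Hkl := H k l Hk Hl Ak Bl.
  exists ((v k + v l) / 2)%R; split.
    move=> i Hi Ai; have := Hk' i Hi Ai; lra.
  move=> j Hj Bj; have := Hl' j Hj Bj; lra.
- case: (@exmax A v n HA) => k [Hk [Ak Hk']].
  exists (v k + 1)%R; split.
    move=> i Hi Ai; have := Hk' i Hi Ai; lra.
  by move=> j Hj Bj; exfalso; apply: HB; exists j.
- case: (@exmin B v n HB) => l [Hl [Bl Hl']].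
  exists (v l - 1)%R; split.
    by move=> i Hi Ai; exfalso; apply: HA; exists i.
  move=> j Hj Bj; have := Hl' j Hj Bj; lra.
- exists 0%R; split.
    by move=> i Hi Ai; exfalso; apply: HA; exists i.
  by move=> j Hj Bj; exfalso; apply: HB; exists j.
Qed.

Section Greedy.
Variable r : nat -> nat -> Prop.
Hypothesis rtrans : forall i j k, r i j -> r j k -> r i k.
Hypothesis rirr : forall i, ~ r i i.

Definition goodq (n : nat) (v : nat -> rat) (q : rat) : Prop :=
  (forall i, (i < n)%N -> r i n -> (v i < q)%R) /\
  (forall j, (j < n)%N -> r n j -> (q < v j)%R).

Definition pickq n v : rat :=
  match excluded_middle_informative (exists q, goodq n v q) with
  | left H => proj1_sig (constructive_indefinite_description _ H)
  | right _ => 0%R end.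

Lemma pickqP n v : (exists q, goodq n v q) -> goodq n v (pickq n v).
Proof.
move=> H; rewrite /pickq; case: excluded_middle_informative => [H'|//].
by case: constructive_indefinite_description.
Qed.

Fixpoint Fg (m : nat) : nat -> rat :=
  match m with 0 => fun _ => 0%R
  | m'.+1 => fun i => if i == m' then pickq m' (Fg m') else Fg m' i end.

Definition eg i := Fg i.+1 i.

Lemma Fg_e m i : (i < m)%N -> Fg m i = eg i.
Proof.
elim: m => [//|m IH] Hi /=.
case: eqP => [->|Hne]; first by rewrite /eg /= eqxx.
apply: IH; move: Hi; rewrite ltnS leq_eqVlt => /orP [/eqP//|//].
Qed.

Lemma Fg_inv m : forall i j, (i < m)%N -> (j < m)%N -> r i j -> (Fg m i < Fg m j)%R.
Proof.
elim: m => [//|m IH] i j Hi Hj Hr /=.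
have lt_m : forall k, (k < m.+1)%N -> k != m -> (k < m)%N.
  move=> k; rewrite ltnS leq_eqVlt => /orP [/eqP ->|//]; by rewrite eqxx.
have Hex : exists q, goodq m (Fg m) q.
  apply: between => i' j' Hi' Hj' Ai Bj; apply: IH => //; exact: rtrans _ _ _ Ai Bj.
have Hg := @pickqP m (Fg m) Hex.
case: eqP => [Ei|Ei]; case: eqP => [Ej|Ej].
- by subst; case: (rirr _ Hr).
- subst i; apply: Hg.2 => //; apply: lt_m => //; exact/eqP.
- subst j; apply: Hg.1 => //; apply: lt_m => //; exact/eqP.
- by apply: IH => //; apply: lt_m => //; apply/eqP.
Qed.

Lemma greedy i j : r i j -> (eg i < eg j)%R.
Proof.
move=> H; rewrite -(@Fg_e (i + j).+1 i) ?ltnS ?leq_addr //.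
rewrite -(@Fg_e (i + j).+1 j) ?ltnS ?leq_addl //.
apply: Fg_inv => //; by rewrite ltnS ?leq_addr ?leq_addl.
Qed.
End Greedy.

Lemma countable_embed_Q (T : Type) (lt : T -> T -> Prop) (S : T -> Prop)
  (ltr : forall x y z, lt x y -> lt y z -> lt x z) (lti : forall x, ~ lt x x) :
  countable_set S -> exists e : T -> rat, forall x y, S x -> S y -> lt x y -> (e x < e y)%R.
Proof.
case=> f Hf.
pose r := fun i j => exists x y, S x /\ S y /\ f x = i /\ f y = j /\ lt x y.
have rt : forall i j k, r i j -> r j k -> r i k.
  move=> i j k [x [y [Sx [Sy [<- [<- Hxy]]]]]] [y' [z [Sy' [Sz [Hy' [<- Hyz]]]]]].
  have E := Hf y' y Sy' Sy Hy'; subst y'.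
  exists x, z; do 4 (split => //); exact: ltr _ _ _ Hxy Hyz.
have ri : forall i, ~ r i i.
  move=> i [x [y [Sx [Sy [Ex [Ey Hxy]]]]]].
  have E : x = y by apply: Hf => //; rewrite Ex Ey.
  subst; exact: lti _ Hxy.
exists (fun x => eg r (f x)) => x y Sx Sy Hxy.
apply: greedy => //; exists x, y; done.
Qed.

Set Implicit Arguments.
Unset Strict Implicit.

Lemma slo_asym T (lt : T -> T -> Prop) (H : strict_linear_order lt) x y :
  lt x y -> lt y x -> False.
Proof. move=> a b; exact: slo_irrefl H x (slo_trans H a b). Qed.

Lemma wf_min W (ltW : W -> W -> Prop) (wf : well_founded ltW) (P : W -> Prop) :
  (exists a, P a) -> exists a, P a /\ forall b, ltW b a -> ~ P b.
Proof.
move=> [a Pa]; apply: NNPP => Hn.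
have : forall a, ~ P a.
  apply: (well_founded_ind wf) => c IH Pc; apply: Hn; exists c; split => //.
by move=> /(_ a).
Qed.

Section Half.
Variables (W : Type) (ltW : W -> W -> Prop) (HW : is_omega1 ltW).
Variables (T : Type) (lt : T -> T -> Prop) (HT : strict_linear_order lt).
Variable Mp : T -> Prop.
Hypothesis Hcnt : forall z, Mp z -> countable_set (fun y => Mp y /\ ~ lt z y).
Variables (x0 : T) (w0 : W).

Definition stepc (a : W) (rec : forall b, ltW b a -> T) : T :=
  match excluded_middle_informative
          (exists y, Mp y /\ forall b (p : ltW b a), lt (rec b p) y) with
  | left H => proj1_sig (constructive_indefinite_description _ H)
  | right _ => x0 end.

Definition cc : W -> T := Fix (o1_wf HW) (fun _ => T) stepc.

Lemma cc_eq a : cc a = @stepc a (fun b _ => cc b).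
Proof.
apply: Fix_eq => a' f g Hfg.
have -> : f = g; last by [].
apply: functional_extensionality_dep => b; apply: functional_extensionality_dep => p.
exact: Hfg.
Qed.

Definition Good a := exists y, Mp y /\ forall b, ltW b a -> lt (cc b) y.

Lemma cc_good a : Good a -> Mp (cc a) /\ forall b, ltW b a -> lt (cc b) (cc a).
Proof.
move=> H; rewrite (cc_eq a) /stepc.
case: excluded_middle_informative => [H'|H'].
  case: constructive_indefinite_description => y [My Hy] /=.
  by split => // b p; apply: Hy.
exfalso; apply: H'; case: H => y [My Hy]; exists y; split => // b p; exact: Hy.
Qed.

Lemma all_below x : Mp x -> exists a, Good a /\ ~ lt (cc a) x.
Proof.
move=> Mx; apply: NNPP => Hn.
have Hall : forall a, Good a /\ lt (cc a) x.
  apply: (well_founded_ind (o1_wf HW)) => a IH.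
  have Ga : Good a by exists x; split => // b Hb; exact: (IH b Hb).2.
  split => //; case: (classic (lt (cc a) x)) => // Hnl.
  by exfalso; apply: Hn; exists a.
case: (Hcnt Mx) => g Hg.
apply: (o1_uncountable HW); exists (fun a => g (cc a)) => a b _ _ E.
have Hin : forall c, Mp (cc c) /\ ~ lt x (cc c).
  move=> c; split; first exact: (cc_good (Hall c).1).1.
  move=> H; apply: (slo_asym HT) H; exact: (Hall c).2.
have E' := Hg _ _ (Hin a) (Hin b) E.
case: (slo_total (o1_linear HW) a b) => [Hab|[//|Hba]].
  exfalso; have := (cc_good (Hall b).1).2 a Hab; rewrite E' => H; exact: (slo_irrefl HT H).
exfalso; have := (cc_good (Hall a).1).2 b Hba; rewrite E' => H; exact: (slo_irrefl HT H).
Qed.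

Definition hprop x a := Good a /\ ~ lt (cc a) x /\
   forall b, ltW b a -> ~ (Good b /\ ~ lt (cc b) x).

Definition hf (x : T) : W :=
  match excluded_middle_informative (exists a, hprop x a) with
  | left H => proj1_sig (constructive_indefinite_description _ H)
  | right _ => w0 end.

Lemma hfP x : Mp x -> hprop x (hf x).
Proof.
move=> Mx; rewrite /hf; case: excluded_middle_informative => [H|H].
  by case: constructive_indefinite_description.
exfalso; apply: H.
case: (wf_min (o1_wf HW) (all_below Mx)) => a [[Ga Ha] Hm].
by exists a; split.
Qed.

Lemma hf_mono x y : Mp x -> Mp y -> lt x y -> ~ ltW (hf y) (hf x).
Proof.
move=> Mx My Hxy Hlt.
case: (hfP Mx) => _ [_ Hmx].
case: (hfP My) => Gy [Hy _].
apply: (Hmx _ Hlt); split => // H; exact: (Hy (slo_trans HT H Hxy)).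
Qed.

Lemma fiber_count a : countable_set (fun x => Mp x /\ hf x = a).
Proof.
case: (classic (Good a)) => Ga.
  case: (Hcnt (cc_good Ga).1) => g Hg; exists g => x y [Mx Ex] [My Ey].
  apply: Hg; split => //.
    by case: (hfP Mx) => _ [H _]; rewrite -Ex.
  by case: (hfP My) => _ [H _]; rewrite -Ey.
exists (fun _ => 0%N) => x y [Mx Ex] _ _; exfalso; apply: Ga.
by case: (hfP Mx) => H _; rewrite -Ex.
Qed.

Lemma half_embed_aux : exists G : T -> W * rat, forall x y, Mp x -> Mp y ->
  (lt x y <-> R_lt ltW (G x).1 (Some (G x).2) (G y).1 (Some (G y).2)).
Proof.
have He : forall a, exists e : T -> rat, forall x y,
    (Mp x /\ hf x = a) -> (Mp y /\ hf y = a) -> lt x y -> (e x < e y)%R.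
  move=> a; apply: countable_embed_Q.
  - exact: slo_trans HT.
  - exact: slo_irrefl HT.
  - exact: fiber_count.
pose E a := proj1_sig (constructive_indefinite_description _ (He a)).
have EP : forall a x y, (Mp x /\ hf x = a) -> (Mp y /\ hf y = a) -> lt x y -> (E a x < E a y)%R.
  move=> a; rewrite /E; by case: constructive_indefinite_description.
have fwd : forall x y, Mp x -> Mp y -> lt x y ->
    R_lt ltW (hf x) (Some (E (hf x) x)) (hf y) (Some (E (hf y) y)).
  move=> x y Mx My Hxy.
  have Hm := hf_mono Mx My Hxy.
  case: (slo_total (o1_linear HW) (hf x) (hf y)) => [H|[H|H]].
  - by left.
  - right; split => //=; rewrite -H; apply: EP => //.
  - by exfalso.
have Rirr : forall a p, ~ R_lt ltW a (Some p) a (Some p).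
  move=> a p [H|[_ H]]; first exact: (slo_irrefl (o1_linear HW) H).
  by move: H; rewrite /= ltxx.
have Rasym : forall a p b q, R_lt ltW a (Some p) b (Some q) -> R_lt ltW b (Some q) a (Some p) -> False.
  move=> a p b q [H1|[E1 H1]] [H2|[E2 H2]].
  - exact: (slo_asym (o1_linear HW) H1 H2).
  - by subst; exact: (slo_irrefl (o1_linear HW) H1).
  - by subst; exact: (slo_irrefl (o1_linear HW) H2).
  - by move: H1 H2 => /= H1 H2; have := lt_trans H1 H2; rewrite ltxx.
exists (fun x => (hf x, E (hf x) x)) => x y Mx My /=; split; first exact: fwd.
move=> HR; case: (slo_total HT x y) => [//|[Exy|Hyx]].
  by subst; exfalso; exact: Rirr HR.
exfalso; exact: Rasym HR (fwd _ _ My Mx Hyx).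
Qed.
End Half.

Lemma half_embed W (ltW : W -> W -> Prop) (HW : is_omega1 ltW)
  T (lt : T -> T -> Prop) (HT : strict_linear_order lt) (Mp : T -> Prop)
  (Hcnt : forall z, Mp z -> countable_set (fun y => Mp y /\ ~ lt z y)) (x0 : T) :
  exists G : T -> W * rat, forall x y, Mp x -> Mp y ->
  (lt x y <-> R_lt ltW (G x).1 (Some (G x).2) (G y).1 (Some (G y).2)).
Proof.
case: (classic (exists w : W, True)) => [[w0 _]|Hn].
  exact: (half_embed_aux HW HT Hcnt x0 w0).
exfalso; apply: (o1_uncountable HW); exists (fun _ => 0%N) => a.
by exfalso; apply: Hn; exists a.
Qed.
Lemma pickle_inj (T : countType) : injective (@pickle T).
Proof. exact: pcan_inj pickleK. Qed.

Lemma count_sub T (A B : T -> Prop) : (forall x, A x -> B x) -> countable_set B -> countable_set A.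
Proof. move=> H [f Hf]; exists f => x y Ax Ay; apply: Hf; exact: H. Qed.

Lemma count_union T (A B : T -> Prop) : countable_set A -> countable_set B ->
  countable_set (fun x => A x \/ B x).
Proof.
move=> [fA HA] [fB HB].
exists (fun x => if excluded_middle_informative (A x) then pickle (inl (fA x) : nat + nat)
                 else pickle (inr (fB x) : nat + nat)) => x y Hx Hy.
case: excluded_middle_informative => Ax; case: excluded_middle_informative => Ay;
  move/pickle_inj => E; try discriminate E.
- case: E => E; exact: HA.
- case: E => E; apply: HB => //; [by case: Hx | by case: Hy].
Qed.

Section UCount.
Variables (W : Type) (ltW : W -> W -> Prop) (HW : is_omega1 ltW).

Definition segf (a : W) : W -> nat :=
  proj1_sig (constructive_indefinite_description _ (o1_segments HW a)).
Lemma segfP a x y : ltW x a -> ltW y a -> segf a x = segf a y -> x = y.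
Proof. rewrite /segf; case: constructive_indefinite_description => f Hf /=; exact: Hf. Qed.

Definition codeW (a c : W) : nat :=
  if excluded_middle_informative (c = a) then 0%N else (segf a c).+1.

Lemma codeW_inj a c1 c2 : (c1 = a \/ ltW c1 a) -> (c2 = a \/ ltW c2 a) ->
  codeW a c1 = codeW a c2 -> c1 = c2.
Proof.
rewrite /codeW => H1 H2.
case: excluded_middle_informative => E1; case: excluded_middle_informative => E2 //.
- by move=> _; rewrite E1 E2.
- move=> [] E; apply: segfP E; [by case: H1 | by case: H2].
Qed.

Lemma negbound s c p : (U_lt ltW s (Uneg c p) \/ s = Uneg c p) ->
  exists a x, s = Uneg a x /\ (c = a \/ ltW c a).
Proof.
case: s => [a x|q|a x] /= [H|H] //.
- exists a, x; split => //; case: H => [H|[H _]]; [by right | by left].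
- case: H => -> ->; exists c, p; split => //; by left.
Qed.

Lemma posbound t c p : (U_lt ltW (Upos c p) t \/ Upos c p = t) ->
  exists b y, t = Upos b y /\ (c = b \/ ltW c b).
Proof.
case: t => [a x|q|a x] /= [H|H] //.
- exists a, x; split => //; case: H => [H|[H _]]; [by right | by left].
- case: H => <- <-; exists c, p; split => //; by left.
Qed.

Definition encode (s t z : Upt W) : nat :=
  match z with
  | Uneg c p => pickle (0%N, (match s with Uneg a _ => codeW a c | _ => 0%N end), p)
  | Umid q => pickle (1%N, 0%N, Some q)
  | Upos c p => pickle (2%N, (match t with Upos b _ => codeW b c | _ => 0%N end), p)
  end.

Lemma seg_count s t : countable_set
  (fun z => (U_lt ltW s z \/ s = z) /\ (U_lt ltW z t \/ z = t)).
Proof.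
exists (encode s t) => z1 z2 [H1 H1'] [H2 H2'].
case: z1 H1 H1' => [c1 p1|q1|c1 p1] H1 H1'; case: z2 H2 H2' => [c2 p2|q2|c2 p2] H2 H2';
  rewrite /encode => /pickle_inj //.
- have [a [x [Es Hc1]]] := negbound H1.
  have [a' [x' [Es' Hc2]]] := negbound H2.
  rewrite Es' in Es; case: Es => Ea Ex; subst a' x'.
  rewrite Es' => [[E1 E2]]; rewrite E2 (codeW_inj Hc1 Hc2 E1) //.
- by case=> ->.
- have [a [x [Es Hc1]]] := posbound H1'.
  have [a' [x' [Es' Hc2]]] := posbound H2'.
  rewrite Es' in Es; case: Es => Ea Ex; subst a' x'.
  rewrite Es' => [[E1 E2]]; rewrite E2 (codeW_inj Hc1 Hc2 E1) //.
Qed.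

Lemma U_irr s : ~ U_lt ltW s s.
Proof.
case: s => [a x|q|a x] /=.
- case=> [H|[_ H]]; first exact: (slo_irrefl (o1_linear HW) H).
  by case: x H => [p|] //=; rewrite ltxx.
- by rewrite ltxx.
- case=> [H|[_ H]]; first exact: (slo_irrefl (o1_linear HW) H).
  by case: x H => [p|] //=; rewrite ltxx.
Qed.

Lemma U_interval_count s t : countable_set (closed_between (U_lt ltW) s t).
Proof.
apply: count_sub (count_union (seg_count s t) (seg_count t s)).
by move=> z; rewrite /closed_between.
Qed.
End UCount.

Lemma flip_slo T (lt : T -> T -> Prop) : strict_linear_order lt ->
  strict_linear_order (fun a b => lt b a).
Proof.
move=> H; split.
- move=> x; exact: (slo_irrefl H).
- move=> x y z a b; exact: (slo_trans H b a).
- move=> x y; case: (slo_total H x y) => [h|[h|h]]; [right; right | right; left | left] => //.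
Qed.

Theorem theorem3p17 (W : Type) (ltW : W -> W -> Prop) (HW : is_omega1 ltW)
    (L : Type) (ltL : L -> L -> Prop) (HL : strict_linear_order ltL) :
  (forall x y : L, omega_equiv ltL x y) <-> embeds_into ltL (U_lt ltW).
Proof.
split.
- move=> Hall.
  case: (classic (exists x : L, True)) => [[x0 _]|Hemp]; last first.
    exists (fun _ => Umid 0%R) => x; exfalso; apply: Hemp; by exists x.
  have Hcnt2 : forall z, ltL x0 z -> countable_set (fun y => ltL x0 y /\ ~ ltL z y).
    move=> z _; apply: count_sub (Hall x0 z) => y [H1 H2]; left; split; first by left.
    case: (slo_total HL y z) => [h|[h|h]]; [by left | by right | by exfalso].
  have Hcnt1 : forall z, ltL z x0 -> countable_set (fun y => ltL y x0 /\ ~ ltL y z).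
    move=> z _; apply: count_sub (Hall x0 z) => y [H1 H2]; right; split; last by left.
    case: (slo_total HL z y) => [h|[h|h]]; [by left | by right | by exfalso].
  have [G2 HG2] := half_embed HW HL Hcnt2 x0.
  have [G1 HG1] := half_embed HW (flip_slo HL) Hcnt1 x0.
  pose f x := match excluded_middle_informative (ltL x x0) with
    | left _ => Uneg (G1 x).1 (Some (G1 x).2)
    | right _ => match excluded_middle_informative (ltL x0 x) with
       | left _ => Upos (G2 x).1 (Some (G2 x).2)
       | right _ => Umid 0%R end end.
  have mid : forall x, ~ ltL x x0 -> ~ ltL x0 x -> x = x0.
    move=> x h1 h2; case: (slo_total HL x x0) => [h|[h|h]] //.
  exists f => x y; rewrite /f.
  case: excluded_middle_informative => Hx1; last case: excluded_middle_informative => Hx2;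
  case: excluded_middle_informative => Hy1; try case: excluded_middle_informative => Hy2.
  + exact: (HG1 y x Hy1 Hx1).
  + split => // _; exact: (slo_trans HL Hx1 Hy2).
  + split => // _; rewrite (mid y Hy1 Hy2); exact: Hx1.
  + split => // h; exfalso; exact: (slo_asym HL (slo_trans HL Hy1 Hx2) h).
  + exact: (HG2 x y Hx2 Hy2).
  + split => // h; exfalso; rewrite (mid y Hy1 Hy2) in h; exact: (slo_asym HL Hx2 h).
  + have e := mid x Hx1 Hx2; subst x.
    split => // h; exfalso; exact: (slo_asym HL Hy1 h).
  + have e := mid x Hx1 Hx2; subst x; split => //.
  + have e := mid x Hx1 Hx2; subst x; rewrite (mid y Hy1 Hy2) /=; rewrite ltxx.
    split => [h|//]; exfalso; exact: (slo_irrefl HL h).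
- move=> [f Hf] x y.
  have finj : forall a b, f a = f b -> a = b.
    move=> a b E; case: (slo_total HL a b) => [h|[h|h]] //; exfalso.
    + by move/Hf: h; rewrite E => h; exact: (U_irr HW h).
    + by move/Hf: h; rewrite E => h; exact: (U_irr HW h).
  have lef : forall a b, (ltL a b \/ a = b) -> (U_lt ltW (f a) (f b) \/ f a = f b).
    move=> a b [h|->]; [left; exact/Hf | by right].
  have [g Hg] := U_interval_count HW (f x) (f y).
  exists (fun z => g (f z)) => a b Ha Hb E; apply: finj; apply: Hg E.
  + move: Ha; rewrite /closed_between /= => [[[h1 h2]|[h1 h2]]];
      [left | right]; split; exact: lef.
  + move: Hb; rewrite /closed_between /= => [[[h1 h2]|[h1 h2]]];
      [left | right]; split; exact: lef.
Qed.
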